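(* Let $X$ be a cubic vertex-transitive graph such that both $1$ and $-1$ are simple eigenvalues of $X$. Then $X$ is bipartite.
   Context: Eigenvalues are those of the adjacency matrix. An eigenvalue is simple if its eigenspace is $1$-dimensional. *)

(* Defs.v *)
From HB Require Import structures.
From mathcomp Require Import all_boot all_order all_algebra all_fingroup all_field.
Set Implicit Arguments. Unset Strict Implicit. Unset Printing Implicit Defensive.
Import GRing.Theory Num.Theory.
Local Open Scope ring_scope.

Definition simple_graph (n : nat) (e : rel 'I_n) : Prop :=
  symmetric e /\ irreflexive e.

Definition cubic (n : nat) (e : rel 'I_n) : Prop :=
  forall x : 'I_n, #|[set y | e x y]| = 3%N.

Definition graph_aut (n : nat) (e : rel 'I_n) (s : {perm 'I_n}) : Prop :=
  forall u v, e (s u) (s v) = e u v.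

Definition vertex_transitive (n : nat) (e : rel 'I_n) : Prop :=
  forall x y : 'I_n, exists s : {perm 'I_n}, graph_aut e s /\ s x = y.

Definition adjmx (n : nat) (e : rel 'I_n) : 'M[algC]_n :=
  \matrix_(i, j) (e i j)%:R.

Definition simple_eigenvalue (n : nat) (A : 'M[algC]_n) (a : algC) : Prop :=
  \rank (eigenspace A a) = 1%N.

Definition bipartite (n : nat) (e : rel 'I_n) : Prop :=
  exists c : 'I_n -> bool, forall u v, e u v -> c u != c v.

(* Main.v *)
Require Import Defs.
From HB Require Import structures.
From mathcomp Require Import all_boot all_order all_algebra all_fingroup all_field.
From mathcomp Require Import zify.
Set Implicit Arguments. Unset Strict Implicit. Unset Printing Implicit Defensive.
Import Order.TTheory GRing.Theory Num.Theory.
Local Open Scope ring_scope.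

Lemma simple_span n (A : 'M[algC]_n) a : simple_eigenvalue A a ->
  exists2 v : 'rV_n, v *m A = a *: v /\ v != 0 &
    forall u : 'rV_n, u *m A = a *: u -> exists c, u = c *: v.
Proof.
rewrite /simple_eigenvalue => r1.
have : eigenvalue A a by rewrite /eigenvalue -mxrank_eq0 r1.
case/eigenvalueP => v Hv vnz; exists v => // u Hu.
have vE : (v <= eigenspace A a)%MS by apply/eigenspaceP.
have EV : (eigenspace A a <= v)%MS.
  have := mxrank_leqif_sup vE; rewrite rank_rV vnz r1 => -[_ <-] //.
apply/sub_rVP; apply: submx_trans EV; exact/eigenspaceP.
Qed.

Lemma mulA_entry n (e : rel 'I_n) (u : 'rV[algC]_n) x : symmetric e ->
  (u *m adjmx e) 0 x = \sum_(y | e x y) u 0 y.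
Proof.
move=> sym; rewrite mxE [RHS]big_mkcond /=; apply: eq_bigr => y _.
by rewrite /adjmx mxE sym; case: (e x y); rewrite ?mulr1 ?mulr0.
Qed.

Lemma neighbors3 n (e : rel 'I_n) x : cubic e ->
  exists y1 y2 y3, uniq [:: y1; y2; y3] /\ forall y, e x y = (y \in [:: y1; y2; y3]).
Proof.
move=> /(_ x); rewrite cardE => H.
have Hu := enum_uniq [set y | e x y].
case E: (enum [set y | e x y]) H Hu => [|y1 [|y2 [|y3 [|? ?]]]] //= _ Hu.
exists y1, y2, y3; split; first by rewrite /= Hu.
move=> y; rewrite -E mem_enum inE //.
Qed.

Lemma nbr_sum n (e : rel 'I_n) x y1 y2 y3 (f : 'I_n -> algC) :
  uniq [:: y1; y2; y3] -> (forall y, e x y = (y \in [:: y1; y2; y3])) ->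
  \sum_(y | e x y) f y = f y1 + f y2 + f y3.
Proof.
move=> Hu He.
rewrite (eq_bigl (fun y => y \in [:: y1; y2; y3])) //.
by rewrite -big_uniq // !big_cons big_nil /= addr0 addrA.
Qed.

Definition pv n (s : {perm 'I_n}) (u : 'rV[algC]_n) : 'rV[algC]_n := \row_i u 0 (s i).

Lemma perm_eig n (e : rel 'I_n) s u a : graph_aut e s ->
  u *m adjmx e = a *: u -> pv s u *m adjmx e = a *: pv s u.
Proof.
move=> Hs Hu; apply/rowP => j; rewrite !mxE.
have := congr1 (fun M : 'rV_n => M 0 (s j)) Hu; rewrite !mxE => <-.
rewrite [RHS](reindex_inj (@perm_inj _ s)) /=; apply: eq_bigr => i _.
by rewrite !mxE Hs.
Qed.

Lemma pm1_vec n (e : rel 'I_n) (a : algC) : vertex_transitive e ->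
  simple_eigenvalue (adjmx e) a -> a^* = a ->
  exists v : 'rV_n, [/\ v *m adjmx e = a *: v,
    (forall x, v 0 x = 1 \/ v 0 x = -1),
    (forall u, u *m adjmx e = a *: u -> exists c, u = c *: v) &
    exists x0, v 0 x0 = 1].
Proof.
move=> vt /simple_span [v0 [Hv0 nz] Sp] ca.
have [x0 Hx0] : exists x0, v0 0 x0 != 0.
  apply/existsP; apply: contraR nz => /existsPn H.
  by apply/eqP/rowP => i; rewrite mxE; exact/eqP/negPn/H.
pose v := (v0 0 x0)^-1 *: v0.
have v1 : v 0 x0 = 1 by rewrite mxE mulVf.
have Hv : v *m adjmx e = a *: v by rewrite -scalemxAl Hv0 !scalerA mulrC.
have Sv : forall u, u *m adjmx e = a *: u -> exists c, u = c *: v.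
  move=> u /Sp [c ->]; exists (c * v0 0 x0).
  by rewrite scalerA -mulrA divff // mulr1.
clearbody v.
have Hreal : forall y, Num.conj_op (v 0 y) = v 0 y.
  pose vc := map_mx Num.conj_op v.
  have : vc *m adjmx e = a *: vc.
    have -> : adjmx e = map_mx Num.conj_op (adjmx e).
      by apply/matrixP => i j; rewrite !mxE conjC_nat.
    by rewrite -map_mxM Hv map_mxZ; congr (_ *: _); exact: ca.
  case/Sv => d Hd.
  have := congr1 (fun M : 'rV_n => M 0 x0) Hd; rewrite !mxE v1 mulr1.
  rewrite /= conjC1 => d1 y.
  have := congr1 (fun M : 'rV_n => M 0 y) Hd; rewrite !mxE -d1 mul1r //.
exists v; split => //; last by exists x0.
move=> y.
have [s [Hs sy]] := vt x0 y.
have [c Hc] := Sv _ (perm_eig Hs Hv).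
have cy : c = v 0 y.
  by have := congr1 (fun M : 'rV_n => M 0 x0) Hc; rewrite !mxE v1 mulr1 sy.
have It : forall m i, v 0 ((s ^+ m)%g i) = c ^+ m * v 0 i.
  elim=> [|m IH] i; first by rewrite expg0 perm1 expr0 mul1r.
  rewrite expgSr permM.
  have := congr1 (fun M : 'rV_n => M 0 ((s ^+ m)%g i)) Hc; rewrite !mxE => ->.
  by rewrite IH mulrA -exprS.
have ck : c ^+ #[s]%g = 1.
  by have := It #[s]%g x0; rewrite expg_order perm1 v1 mulr1.
have nc : `|c| = 1.
  apply/eqP; rewrite -(pexpr_eq1 (order_gt0 s)) ?normr_ge0 //.
  by rewrite -normrX ck normr1.
have : c \is Num.real by rewrite CrealE cy Hreal.
rewrite realE -cy => /orP [c0|c0].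
  by left; rewrite -(ger0_norm c0).
by right; rewrite -[c]opprK -(ler0_norm c0) nc.
Qed.
Lemma comb (p p1 p2 p3 q q1 q2 q3 : int) :
  (p = 1 \/ p = -1) -> (p1 = 1 \/ p1 = -1) -> (p2 = 1 \/ p2 = -1) -> (p3 = 1 \/ p3 = -1) ->
  (q = 1 \/ q = -1) -> (q1 = 1 \/ q1 = -1) -> (q2 = 1 \/ q2 = -1) -> (q3 = 1 \/ q3 = -1) ->
  p1 + p2 + p3 = p -> q1 + q2 + q3 = - q ->
  ~ (p1 * q1 = - (p * q) /\ p2 * q2 = - (p * q) /\ p3 * q3 = - (p * q)) ->
  p1 * q1 + p2 * q2 + p3 * q3 = p * q.
Proof.
by do 8 (case=> ->); move=> //=; lia.
Qed.

Lemma toint n (v : 'rV[algC]_n) : (forall x, v 0 x = 1 \/ v 0 x = -1) ->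
  exists f : 'I_n -> int, forall x, v 0 x = (f x)%:~R /\ (f x = 1 \/ f x = -1).
Proof.
have h : (-1 : algC) != 1.
  by rewrite eq_sym -addr_eq0 -[1 + 1]/(2%:R : algC) pnatr_eq0.
move=> H; exists (fun x => if v 0 x == 1 then 1 else -1) => x.
case: (H x) => ->; first by rewrite eqxx; split => //; left.
by rewrite (negbTE h) rmorphN /=; split => //; right.
Qed.

Unset Implicit Arguments.
Theorem theorem3p1 (n : nat) (e : rel 'I_n) :
  simple_graph e -> cubic e -> vertex_transitive e ->
  simple_eigenvalue (adjmx e) 1 -> simple_eigenvalue (adjmx e) (-1) ->
  bipartite e.
Proof.
move=> [sym irr] cub vt s1 s2.
have [v [Hv Pv Sv [x0 v1]]] := pm1_vec vt s1 (conjC1 _).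
have cm1 : (-1 : algC)^* = -1 by rewrite rmorphN rmorph1.
have [w [Hw Pw Sw [x1 w1']]] := pm1_vec vt s2 cm1.
have [fv Fv] := toint Pv.
have [fw Fw] := toint Pw.
have fv1 : forall x, fv x = 1 \/ fv x = -1 by move=> x; case: (Fv x).
have fw1 : forall x, fw x = 1 \/ fw x = -1 by move=> x; case: (Fw x).
have NE : forall (u : 'rV_n) (f : 'I_n -> int) (k : int), (forall x, u 0 x = (f x)%:~R) ->
    u *m adjmx e = k%:~R *: u -> forall x y1 y2 y3, uniq [:: y1; y2; y3] ->
    (forall y, e x y = (y \in [:: y1; y2; y3])) -> f y1 + f y2 + f y3 = k * f x.
  move=> u f k Hf Hu x y1 y2 y3 Hun Hy.
  have := congr1 (fun M : 'rV_n => M 0 x) Hu.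
  rewrite mulA_entry // (nbr_sum _ Hun Hy) !mxE !Hf.
  by rewrite -!rmorphD -rmorphM => /intr_inj.
have Hv' : v *m adjmx e = (1:int)%:~R *: v by rewrite Hv rmorph1.
have Hw' : w *m adjmx e = (-1:int)%:~R *: w by rewrite Hw rmorphN1.
have NEv := NE v fv 1 (fun x => proj1 (Fv x)) Hv'.
have NEw := NE w fw (-1) (fun x => proj1 (Fw x)) Hw'.
have AU : forall (u : 'rV_n) (f : 'I_n -> int) a b, (forall x, u 0 x = (f x)%:~R) ->
    u 0 b = 1 -> (forall u', u' *m adjmx e = a *: u' -> exists c, u' = c *: u) ->
    u *m adjmx e = a *: u ->
    forall s, graph_aut e s -> forall z, f (s z) = f (s b) * f z.
  move=> u f a b Hf u1 Su Hu s Hs z.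
  have [c Hc] := Su _ (perm_eig Hs Hu).
  have := congr1 (fun M : 'rV_n => M 0 b) Hc; rewrite !mxE u1 mulr1 => cE.
  have := congr1 (fun M : 'rV_n => M 0 z) Hc; rewrite !mxE -cE !Hf.
  by rewrite -rmorphM => /intr_inj.
have w1 : w 0 x0 = 1 \/ w 0 x0 = -1 by [].
pose T x := [forall y, e x y ==> (fv y * fw y == - (fv x * fw x))].
have TI : forall x y, T x -> T y.
  move=> x y Tx; have [s [Hs <-]] := vt x y.
  apply/forallP => y'; apply/implyP => Hy'.
  have Hz := Hs x (s^-1%g y'); rewrite permKV Hy' in Hz.
  have := implyP (forallP Tx (s^-1%g y')) (esym Hz) => /eqP HT.
  rewrite -{1 2}(permKV s y').
  have AUv := AU v fv 1 x0 (fun x => proj1 (Fv x)) v1 Sv Hv s Hs.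
  have AUw := AU w fw (-1) x1 (fun x => proj1 (Fw x)) w1' Sw Hw s Hs.
  rewrite (AUv (s^-1%g y')) (AUv x) (AUw (s^-1%g y')) (AUw x).
  by rewrite mulrACA HT mulrN mulrACA.
case: (boolP (T x0)) => Tx0.
  exists (fun x => fv x * fw x == 1) => a b hab.
  have := implyP (forallP (TI x0 a Tx0) b) hab => /eqP.
  by case: (fv1 a) => ->; case: (fw1 a) => ->; case: (fv1 b) => ->; case: (fw1 b) => ->.
exfalso.
pose uv : 'rV[algC]_n := \row_x ((fv x * fw x)%:~R).
have Hu : uv *m adjmx e = 1 *: uv.
  apply/rowP => x; rewrite mulA_entry //.
  have [y1 [y2 [y3 [Hun Hy]]]] := neighbors3 x cub.
  rewrite (nbr_sum _ Hun Hy) !mxE mul1r -!rmorphD; congr (_%:~R).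
  apply: comb; try exact: fv1; try exact: fw1.
  - by rewrite (NEv x y1 y2 y3 Hun Hy) mul1r.
  - by rewrite (NEw x y1 y2 y3 Hun Hy) mulN1r.
  move=> [h1 [h2 h3]].
  have : T x.
    apply/forallP => y; apply/implyP; rewrite Hy !inE => /or3P [] /eqP ->; exact/eqP.
  by move=> Tx; move: Tx0; rewrite (TI x x0 Tx).
have [c Hc] := Sv _ Hu.
have fx0 : fv x0 = 1 by apply: (@intr_inj algC); rewrite -(proj1 (Fv x0)) v1.
have cE : c = (fw x0)%:~R.
  by have := congr1 (fun M : 'rV_n => M 0 x0) Hc; rewrite !mxE v1 mulr1 fx0 mul1r.
have Cw : forall x, fw x = fw x0.
  move=> x; have := congr1 (fun M : 'rV_n => M 0 x) Hc.
  rewrite !mxE cE (proj1 (Fv x)) -rmorphM => /intr_inj.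
  by case: (fv1 x) => ->; case: (fw1 x) => ->; case: (fw1 x0) => ->.
have [y1 [y2 [y3 [Hun Hy]]]] := neighbors3 x0 cub.
have := NEw x0 y1 y2 y3 Hun Hy; rewrite !Cw.
by case: (fw1 x0) => ->.
Qed.
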